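(* Let $n\ge3$. Let $\tilde\Lambda_1$ be the set of $\alpha\in\mathbb{R}\setminus\mathrm{ev}(A_n)$ satisfying \[ (\alpha+2)\langle\mathbf 1,(A_n-\alpha I)^{-1}\mathbf 1\rangle-1=0, \] and put $\Lambda_1=\tilde\Lambda_1\setminus(\mathrm{ev}(A_n)\cup\{0,-1,-2\})$. Then \[ \Lambda_1\setminus\{2\}=\{x\in\mathbb{R}:\Phi_n(x)=0\}\setminus(\mathrm{ev}(A_n)\cup\{0,-1,2,-2\}). \]
   Context: $A_n$ is the $n\times n$ adjacency matrix of the path $P_n$ (ones on the super- and subdiagonal, zeros elsewhere), $\mathrm{ev}(A_n)$ its set of eigenvalues, $\mathbf 1$ the all-ones vector. $U_n$ is the Chebyshev polynomial of the second kind, $U_n(\cos\theta)=\sin((n+1)\theta)/\sin\theta$, $\tilde U_n(x)=U_n(x/2)$, and $\Phi_n(x)=((n+1)x^2-6x-4n)\tilde U_n(x)+2(x+2)\tilde U_{n-1}(x)+2(x+2)$. *)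

(* Defs.v *)
From HB Require Import structures.
From mathcomp Require Import all_boot all_order all_algebra.
Set Implicit Arguments. Unset Strict Implicit. Unset Printing Implicit Defensive.
Import Order.TTheory GRing.Theory Num.Theory.
Local Open Scope ring_scope.

Definition pathA (R : ringType) (n : nat) : 'M[R]_n :=
  \matrix_(i < n, j < n) (if (i.+1 == j :> nat) || (j.+1 == i :> nat) then 1 else 0).

Definition ones (R : ringType) (n : nat) : 'cV[R]_n := const_mx 1.

Definition resolvent_sum (R : fieldType) (n : nat) (a : R) : R :=
  ((ones R n)^T *m invmx (pathA R n - a%:M) *m ones R n) 0 0.

(* Ut k x = U_k(x/2), via the Chebyshev recurrence
   Ut 0 = 1, Ut 1 = x, Ut (k+2) = x Ut (k+1) - Ut k.
   Upair k x = (Ut k x, Ut (k+1) x). *)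
Fixpoint Upair (R : ringType) (k : nat) (x : R) : R * R :=
  match k with
  | 0 => (1, x)
  | k'.+1 => let p := Upair k' x in (p.2, x * p.2 - p.1)
  end.
Definition Ut (R : ringType) (k : nat) (x : R) : R := (Upair k x).1.

Definition Phi (R : ringType) (n : nat) (x : R) : R :=
  ((n.+1)%:R * x ^+ 2 - 6 * x - 4 * n%:R) * Ut n x
  + 2 * (x + 2) * Ut n.-1 x + 2 * (x + 2).

Definition Lambda1tilde (R : fieldType) (n : nat) (a : R) : Prop :=
  ~~ eigenvalue (pathA R n) a /\ (a + 2) * resolvent_sum n a - 1 = 0.

Definition Lambda1 (R : fieldType) (n : nat) (a : R) : Prop :=
  Lambda1tilde n a /\ ~~ eigenvalue (pathA R n) a /\ a <> 0 /\ a <> -1 /\ a <> -2.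

(* Main.v *)
Require Import Defs.
From HB Require Import structures.
From mathcomp Require Import all_boot all_order all_algebra.
From mathcomp Require Import ring lra zify.
Import Order.TTheory GRing.Theory Num.Theory.
Local Open Scope ring_scope.

Section S.
Variable R : fieldType.

Definition V (x : R) (k : nat) : R := if k is k'.+1 then Ut k' x else 0.

Lemma V_rec x k : V x k.+2 = x * V x k.+1 - V x k.
Proof. by case: k => [|k] //=; rewrite /Ut /= ?mulr1 ?subr0. Qed.

Lemma sum_ind n (h : nat -> R) (m : nat) :
  \sum_(j < n) (if (j == m :> nat) then h j else 0) = if (m < n)%N then h m else 0.
Proof.
case: ltnP => Hm.
  rewrite (bigD1 (Ordinal Hm)) //= eqxx.
  rewrite big1 ?addr0 // => j Hj.
  case: eqP => // Ej; exfalso; move/eqP: Hj; apply; apply: val_inj; exact: Ej.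
by rewrite big1 // => j _; case: eqP => // Ej; move: (ltn_ord j); rewrite Ej ltnNge Hm.
Qed.

Lemma path_sum n (g : nat -> R) (i : 'I_n) :
  g 0%N = 0 -> g n.+1 = 0 ->
  \sum_(j < n) (if (i.+1 == j :> nat) || (j.+1 == i :> nat) then 1 else 0) * g j.+1
  = g i + g i.+2.
Proof.
move=> g0 gn.
have -> : \sum_(j < n) (if (i.+1 == j :> nat) || (j.+1 == i :> nat) then 1 else 0) * g j.+1
  = \sum_(j < n) (if (j == i.+1 :> nat) then g j.+1 else 0)
  + \sum_(j < n) (if (j.+1 == i :> nat) then g j.+1 else 0).
  rewrite -big_split /=; apply: eq_bigr => j _.
  have -> : (i.+1 == j :> nat) = (j == i.+1 :> nat) by rewrite eq_sym.
  case: (eqVneq (j:nat) i.+1) => [E|_] /=.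
    have -> : (j.+1 == i :> nat) = false by rewrite E; lia.
    by rewrite mul1r addr0.
  by case: (j.+1 == i :> nat); rewrite ?mul1r ?mul0r ?add0r.
rewrite (sum_ind _ (fun j => g j.+1)) [RHS]addrC; congr (_ + _).
  case: (ltnP i.+1 n) => // H; have E : i.+2 = n.+1 by move: (ltn_ord i) H; lia.
  by rewrite E gn.
case: i => [[|i] Hi] /=; first by rewrite g0 big1 // => j _.
have -> : \sum_(j < n) (if (j.+1 == i.+1)%N then g j.+1 else 0) =
  \sum_(j < n) (if (j == i :> nat) then g j.+1 else 0) by [].
have Hi2 : (i < n)%N by lia.
by rewrite (sum_ind _ (fun j => g j.+1)) Hi2.
Qed.

Lemma A_col n (g : nat -> R) : g 0%N = 0 -> g n.+1 = 0 ->
  pathA R n *m (\col_(j < n) g j.+1) = \col_(i < n) (g i + g i.+2).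
Proof.
move=> g0 gn; apply/matrixP => i k; rewrite !mxE.
rewrite -(path_sum _ g i g0 gn); apply: eq_bigr => j _; by rewrite !mxE.
Qed.

Lemma row_A n (g : nat -> R) : g 0%N = 0 -> g n.+1 = 0 ->
  (\row_(j < n) g j.+1) *m pathA R n = \row_(i < n) (g i + g i.+2).
Proof.
move=> g0 gn; apply/matrixP => k i; rewrite !mxE.
rewrite -(path_sum _ g i g0 gn); apply: eq_bigr => j _; by rewrite !mxE orbC mulrC.
Qed.

Lemma V1 x : V x 1 = 1. Proof. by []. Qed.

Lemma eig_un n x : (0 < n)%N -> ~~ eigenvalue (pathA R n) x -> V x n.+1 != 0.
Proof.
move=> n0 He; apply/eqP => H; move/negP: He; apply; apply/eigenvalueP.
exists (\row_(j < n) V x j.+1).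
  rewrite row_A //; apply/rowP => i; rewrite !mxE V_rec.
  by rewrite addrC subrK.
case: n n0 H => // n _ H.
apply/eqP => /rowP /(_ ord0); rewrite !mxE /= => /eqP; by rewrite oner_eq0.
Qed.

Lemma sumV n x : (x - 2) * \sum_(i < n) V x i.+1 = V x n.+1 - V x n - 1.
Proof.
elim: n => [|n IH]; first by rewrite big_ord0 mulr0 /= /Ut /= subr0 subrr.
rewrite big_ord_recr mulrDr IH V_rec; ring.
Qed.

Lemma unit_of n x : ~~ eigenvalue (pathA R n) x -> pathA R n - x%:M \in unitmx.
Proof. by move=> He; rewrite -row_free_unit -kermx_eq0; exact: negbNE. Qed.

Lemma resolv n x : x != 2 -> ~~ eigenvalue (pathA R n) x -> V x n.+1 != 0 ->
  resolvent_sum n x * ((2 - x) * V x n.+1) =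
  n%:R * V x n.+1 - 2 * \sum_(i < n) V x i.+1.
Proof.
move=> hx He hu.
set un := V x n.+1.
pose f k := un - V x k - V x (n.+1 - k).
have f0 : f 0%N = 0 by rewrite /f subn0 /= subr0 subrr.
have fn : f n.+1 = 0 by rewrite /f subnn /= subrr subr0.
have hk : (2 - x) * un != 0.
  by rewrite mulf_neq0 // subr_eq0 eq_sym.
have hB : (pathA R n - x%:M) *m (\col_(j < n) f j.+1) = ((2 - x) * un) *: ones R n.
  rewrite mulmxBl A_col // mul_scalar_mx; apply/matrixP => i k; rewrite !mxE.
  have Hi := ltn_ord i.
  set p := (n - i.+1)%N.
  have e1 : (n.+1 - i = p.+2)%N by rewrite /p; lia.
  have e2 : (n.+1 - i.+1 = p.+1)%N by rewrite /p; lia.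
  have e3 : (n.+1 - i.+2 = p)%N by rewrite /p; lia.
  rewrite /f e1 e2 e3 (V_rec x i) (V_rec x p); ring.
have hinv : invmx (pathA R n - x%:M) *m ones R n = ((2 - x) * un)^-1 *: (\col_(j < n) f j.+1).
  have -> : ones R n = ((2 - x) * un)^-1 *: ((pathA R n - x%:M) *m (\col_(j < n) f j.+1)).
    by rewrite hB scalerA mulVf // scale1r.
  by rewrite -scalemxAr mulKmx // unit_of.
rewrite /resolvent_sum -mulmxA hinv !mxE.
under eq_bigr do rewrite !mxE mul1r.
rewrite -mulr_sumr mulrC mulrA mulfV // mul1r.
rewrite /f !sumrB sumr_const card_ord.
have -> : \sum_(i < n) V x (n.+1 - i.+1) = \sum_(i < n) V x i.+1.
  rewrite (reindex_inj rev_ord_inj) /=; apply: eq_bigr => i _.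
  change (V x (n.+1 - (n - i.+1).+1) = V x i.+1); congr (V x _); have := ltn_ord i; lia.
by rewrite mulr_natl; ring.
Qed.

Lemma key n x : (0 < n)%N -> x != 2 -> ~~ eigenvalue (pathA R n) x ->
  ((x + 2) * resolvent_sum n x - 1) * ((2 - x) ^+ 2 * V x n.+1) = - Phi n x.
Proof.
move=> n0 hx He.
have hu := eig_un n x n0 He.
have hS := resolv n x hx He hu.
have hT := sumV n x.
move: hS hT; set S := resolvent_sum n x; set T := \sum_(i < n) _.
case: n n0 He hu S T => // m _ He hu S T hS hT.
rewrite /Phi /=.
change (Ut m.+1 x) with (V x m.+2); change (Ut m x) with (V x m.+1).
move: hS hT; set un := V x m.+2; set um := V x m.+1 => hS hT.
apply/eqP; rewrite -addr_eq0.
have E : ((x + 2) * S - 1) * ((2 - x) ^+ 2 * un) +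
  (((m.+2)%:R * x ^+ 2 - 6 * x - 4 * (m.+1)%:R) * un + 2 * (x + 2) * um + 2 * (x + 2))
  = (x + 2) * (2 - x) * (S * ((2 - x) * un) - ((m.+1)%:R * un - 2 * T))
    + 2 * (x + 2) * ((x - 2) * T - (un - um - 1)).
  ring.
by rewrite E hS hT !subrr !mulr0 addr0.
Qed.
End S.

Theorem proposition4p5 (R : realFieldType) (n : nat) (hn : (3 <= n)%N) (x : R) :
  (Lambda1 n x /\ x <> 2) <->
  (Phi n x = 0 /\ ~~ eigenvalue (pathA R n) x /\
   x <> 0 /\ x <> -1 /\ x <> 2 /\ x <> -2).
Proof.
have n0 : (0 < n)%N by lia.
split.
  move=> [[[hne hres] [_ [h0 [h1 h2]]]] hx2].
  have hx : x != 2 by apply/eqP.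
  have := key _ n x n0 hx hne; rewrite hres mul0r => /esym /eqP; rewrite oppr_eq0 => /eqP hP.
  by [].
move=> [hP [hne [h0 [h1 [h2 hm2]]]]].
have hx : x != 2 by apply/eqP.
split=> //; split=> //; split=> //.
have := key _ n x n0 hx hne; rewrite hP oppr0 => /eqP; rewrite mulf_eq0 => /orP [/eqP //|].
rewrite mulf_eq0 expf_eq0 /= subr_eq0 eq_sym (negbTE hx) /=.
by rewrite (negbTE (eig_un _ n x n0 hne)).
Qed.
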